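(* Under the standing setup, let $\mathcal S_\dagger\subset\mathbb R^D$ be a finite nonempty anchor set and let $\hat V_\tau(s,l,t)$, for $s\in\mathcal S_\dagger$, $l\in\{0,\dots,k\}$, $t\in\{0,\dots,T-1\}$, be the values computed by the anchor recursion. Then $\hat V_\tau(s,l,t)\ge V_\tau(s,l,t)$ for all such $s,l,t$.
   Context: Standing setup: state space $\mathcal S=\mathbb R^D$, finite action set $\mathcal A$, horizon $T\ge2$, noise space $\mathcal U$. A transition mechanism $g_S:\mathcal S\times\mathcal A\times\mathcal U\to\mathcal S$ is bijective in its last argument, with inverse $g_S^{-1}:\mathcal S\times\mathcal A\times\mathcal S\to\mathcal U$ satisfying $u=g_S^{-1}(s,a,s')$ whenever $s'=g_S(s,a,u)$. Reward $R:\mathcal S\times\mathcal A\to\mathbb R$. Lipschitz assumption: for each $a\in\mathcal A,u\in\mathcal U$ there is $K_{a,u}\ge0$ with $\|g_S(s,a,u)-g_S(s',a,u)\|\le K_{a,u}\|s-s'\|$, and for each $a$ there is $C_a\ge0$ with $|R(s,a)-R(s',a)|\le C_a\|s-s'\|$, for all $s,s'\in\mathcal S$ (Euclidean norm). An observed episode $\tau$ consists of states $s_0,\dots,s_{T-1}$ and actions $a_0,\dots,a_{T-1}$; put $u_t=g_S^{-1}(s_t,a_t,s_{t+1})$ for $t=0,\dots,T-2$. Fix a budget $k\in\{0,\dots,T\}$. For $t\le T-2$ define $F^+_{\tau,t}((s,l),a)=\big(g_S(s,a,u_t),\,l+\mathbf 1[a\ne a_t]\big)$. For $t\in\{0,\dots,T-1\}$,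 $l\in\{0,\dots,k\}$, $s\in\mathcal S$, the value $V_\tau(s,l,t)$ is the maximum of $\sum_{t'=t}^{T-1}R(s'_{t'},a'_{t'})$ over action sequences $a'_t,\dots,a'_{T-1}\in\mathcal A$ with $\sum_{t'=t}^{T-1}\mathbf 1[a'_{t'}\ne a_{t'}]\le k-l$, where $s'_t=s$ and $s'_{t'+1}=g_S(s'_{t'},a'_{t'},u_{t'})$. Constants: $K_{u_t}=\max_{a}K_{a,u_t}$, $C=\max_a C_a$, $L_{T-1}=C$, $L_t=C+L_{t+1}K_{u_t}$ for $t\le T-2$. For $l\in\{0,\dots,k\}$ and time $t$, let $\mathcal A'_{l,t}=\{a_t\}$ if $l=k$ and $\mathcal A'_{l,t}=\mathcal A$ if $l<k$. Anchor recursion (defined only for $s\in\mathcal S_\dagger$): $\hat V_\tau(s,l,T-1)=\max_{a\in\mathcal A}R(s,a)$ for $l<k$ and $\hat V_\tau(s,k,T-1)=R(s,a_{T-1})$; for $t=T-2,\dots,0$ and $l=k,\dots,0$, $$\hat V_\tau(s,l,t)=\max_{a\in\mathcal A'_{l,t}}\Big\{R(s,a)+\min_{s_\dagger\in\mathcal S_\dagger}\big\{\hat V_\tau(s_\dagger,l_a,t+1)+L_{t+1}\|s_\dagger-s_a\|\big\}\Big\},$$ where $(s_a,l_a)=F^+_{\tau,t}((s,l),a)$. *)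

(* Defs.v *)
From mathcomp Require Import all_boot all_order all_algebra.
From mathcomp Require Import reals.
Set Implicit Arguments. Unset Strict Implicit. Unset Printing Implicit Defensive.
Import Order.TTheory GRing.Theory Num.Theory.
Local Open Scope ring_scope.

Section CFDefs.
Variables (R : realType) (D : nat) (A : finType) (U : Type).
Local Notation S := 'rV[R]_D.

Definition enorm (x : S) : R := Num.sqrt (\sum_(i < D) x 0 i ^+ 2).

Variables (g : S -> A -> U -> S) (ginv : S -> A -> S -> U) (Rw : S -> A -> R).
(* Lipschitz constants K_{a,u} and C_a *)
Variables (K : A -> U -> R) (Cc : A -> R).
(* horizon T, observed episode (states st, actions ac), budget k, anchor set Sd *)
Variables (T : nat) (st : nat -> S) (ac : nat -> A) (k : nat) (Sd : seq S).

Definition noise (t : nat) : U := ginv (st t) (ac t) (st t.+1).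

(* action a'_{t'} of a candidate sequence x (only indices < T are used) *)
Definition act (x : T.-tuple A) (t' : nat) : A := nth (ac 0) x t'.

Fixpoint cf_state (s : S) (t : nat) (x : T.-tuple A) (n : nat) : S :=
  if n is n'.+1 then g (cf_state s t x n') (act x (t + n')) (noise (t + n'))
  else s.

Definition ret (s : S) (t : nat) (x : T.-tuple A) : R :=
  \sum_(t <= t' < T) Rw (cf_state s t x (t' - t)) (act x t').

Definition changes (t : nat) (x : T.-tuple A) : nat :=
  \sum_(t <= t' < T) (act x t' != ac t').

Definition obs_actions : T.-tuple A := [tuple ac i | i < T].

(* V_tau(s,l,t): maximum over feasible action sequences a'_t..a'_{T-1};
   the observed sequence is feasible, so using its return as the neutral
   element of the max gives exactly the maximum. *)
Definition Vtau (s : S) (l t : nat) : R :=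
  \big[Num.max/ret s t obs_actions]_(x : T.-tuple A | (changes t x <= k - l)%N)
     ret s t x.

Definition Ku (t : nat) : R := \big[Num.max/K (ac 0) (noise t)]_(b : A) K b (noise t).
Definition Cmax : R := \big[Num.max/Cc (ac 0)]_(b : A) Cc b.

(* Lm m = L_{T-1-m} *)
Fixpoint Lm (m : nat) : R :=
  if m is m'.+1 then Cmax + Lm m' * Ku (T.-1 - m) else Cmax.
Definition Lc (t : nat) : R := Lm (T.-1 - t).

Definition maxA' (l t : nat) (f : A -> R) : R :=
  if (l < k)%N then \big[Num.max/f (ac t)]_(b : A) f b else f (ac t).

Definition minSd (f : S -> R) : R :=
  match Sd with
  | [::] => 0
  | x :: r => foldr (fun y m => Num.min (f y) m) (f x) r
  end.

(* Vhm m s l = hat V_tau(s, l, T-1-m) (anchor recursion) *)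
Fixpoint Vhm (m : nat) (s : S) (l : nat) : R :=
  if m is m'.+1 then
    let t := (T.-1 - m)%N in
    maxA' l t (fun b =>
      Rw s b + minSd (fun sd =>
        Vhm m' sd (l + (b != ac t))%N + Lc t.+1 * enorm (sd - g s b (noise t))))
  else maxA' l T.-1 (fun b => Rw s b).

Definition Vhat (s : S) (l t : nat) : R := Vhm (T.-1 - t) s l.

End CFDefs.

(* Main.v *)
Require Import Defs.
From mathcomp Require Import all_boot all_order all_algebra.
From mathcomp Require Import reals ring lra zify.
Import Order.TTheory GRing.Theory Num.Theory.
Local Open Scope ring_scope.

Lemma dsum (R : realType) n (f g : 'I_n -> R) :
  \sum_i \sum_j f i * g j = (\sum_i f i) * (\sum_j g j).
Proof. rewrite big_distrl /=; apply: eq_bigr => i _; by rewrite big_distrr. Qed.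

Lemma cs (R : realType) n (a b : 'I_n -> R) :
  (\sum_i a i * b i) ^+ 2 <= (\sum_i a i ^+ 2) * (\sum_i b i ^+ 2).
Proof.
have E : \sum_i \sum_j (a i * b j - a j * b i) ^+ 2 =
  2 * ((\sum_i a i ^+ 2) * (\sum_i b i ^+ 2) - (\sum_i a i * b i) ^+ 2).
  transitivity (\sum_i \sum_j (a i ^+ 2 * b j ^+ 2) + \sum_i \sum_j (b i ^+ 2 * a j ^+ 2)
     - \sum_i \sum_j (2 * (a i * b i)) * (a j * b j)).
    rewrite -big_split /= -sumrB; apply: eq_bigr => i _.
    rewrite -big_split /= -sumrB; apply: eq_bigr => j _; ring.
  rewrite !dsum -mulr_sumr.
  rewrite expr2; ring.
have : 0 <= \sum_i \sum_j (a i * b j - a j * b i) ^+ 2.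
  by apply: sumr_ge0 => i _; apply: sumr_ge0 => j _; exact: sqr_ge0.
rewrite E; lra.
Qed.

Lemma enorm_tri (R : realType) D (x y : 'rV[R]_D) : enorm (x + y) <= enorm x + enorm y.
Proof.
rewrite /enorm.
set A := \sum_i x 0 i ^+ 2; set B := \sum_i y 0 i ^+ 2.
have ->: \sum_(i < D) (x + y) 0 i ^+ 2 = A + B + 2 * \sum_i x 0 i * y 0 i.
  rewrite /A /B -big_split /= mulr_sumr -big_split /=; apply: eq_bigr => i _.
  rewrite mxE; ring.
have hA : 0 <= A by apply: sumr_ge0 => i _; exact: sqr_ge0.
have hB : 0 <= B by apply: sumr_ge0 => i _; exact: sqr_ge0.
have hS : \sum_i x 0 i * y 0 i <= Num.sqrt A * Num.sqrt B.
  rewrite -sqrtrM //; apply: (le_trans (ler_norm _)).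
  rewrite -sqrtr_sqr ler_sqrt; last by rewrite mulr_ge0.
  exact: cs.
have h0 : 0 <= Num.sqrt A + Num.sqrt B by rewrite addr_ge0 ?sqrtr_ge0.
rewrite -(ger0_norm h0) -sqrtr_sqr ler_sqrt; last exact: sqr_ge0.
rewrite sqrrD !sqr_sqrtr //.
lra.
Qed.

Lemma enormB (R : realType) D (x y : 'rV[R]_D) : enorm (x - y) = enorm (y - x).
Proof. rewrite /enorm; congr Num.sqrt; apply: eq_bigr => i _; rewrite !mxE; ring. Qed.

Lemma enorm_self (R : realType) D (x : 'rV[R]_D) : enorm (x - x) = 0.
Proof. rewrite /enorm big1 ?sqrtr0 // => i _; by rewrite !mxE subrr expr0n. Qed.

Section Main.
Variables (R : realType) (D : nat) (A : finType) (U : Type)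
  (g : 'rV[R]_D -> A -> U -> 'rV[R]_D) (ginv : 'rV[R]_D -> A -> 'rV[R]_D -> U)
  (Rw : 'rV[R]_D -> A -> R) (K : A -> U -> R) (Cc : A -> R)
  (T : nat) (st : nat -> 'rV[R]_D) (ac : nat -> A) (k : nat) (Sd : seq 'rV[R]_D).

Local Notation noise := (noise ginv st ac).
Local Notation act := (@act A T ac).
Local Notation cf_state := (cf_state g ginv st ac).
Local Notation ret := (ret g ginv Rw st ac).
Local Notation changes := (@changes A T ac).
Local Notation Lm := (Lm ginv K Cc T st ac).
Local Notation Lc := (Lc ginv K Cc T st ac).
Local Notation Ku := (Ku ginv K st ac).
Local Notation Cmax := (Cmax Cc ac).
Local Notation Vhm := (Vhm g ginv Rw K Cc T st ac k Sd).

Lemma minSd_ge (c : R) (f : 'rV[R]_D -> R) :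
  Sd != [::] -> (forall y, y \in Sd -> c <= f y) -> c <= minSd Sd f.
Proof.
rewrite /minSd; case: Sd => [//|x r] _ H.
have Hx : c <= f x by apply: H; rewrite inE eqxx.
have Hr : forall y, y \in r -> c <= f y.
  by move=> y hy; apply: H; rewrite inE hy orbT.
elim: r Hr {H} => [//|y r IH] Hr /=.
rewrite le_min; apply/andP; split; first by apply: Hr; rewrite inE eqxx.
by apply: IH => z hz; apply: Hr; rewrite inE hz orbT.
Qed.

Lemma maxA'_ge l t (f0 : A -> R) b :
  (l < k)%N || (b == ac t) -> f0 b <= maxA' ac k l t f0.
Proof.
rewrite /maxA'; case: ifP => _ /=.
  by move=> _; exact: le_bigmax.
by move/eqP->.
Qed.

Lemma cf_shift s t x n :
  cf_state s t x n.+1 = cf_state (g s (act x t) (noise t)) t.+1 x n.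
Proof.
elim: n => [|n IH] /=; first by rewrite addn0.
by rewrite -IH /= addSnnS.
Qed.

Lemma ret_split s t x : (t < T)%N ->
  ret s t x = Rw s (act x t) + ret (g s (act x t) (noise t)) t.+1 x.
Proof.
move=> ht; rewrite /Defs.ret big_ltn // subnn /=; congr (_ + _).
apply: eq_big_nat => t' /andP[h1 h2].
by rewrite -cf_shift subnSK.
Qed.

Lemma changes_split t x : (t < T)%N ->
  changes t x = ((act x t != ac t) + changes t.+1 x)%N.
Proof. by move=> ht; rewrite /Defs.changes big_ltn. Qed.

Hypothesis HK : forall a u, 0 <= K a u.
Hypothesis HC : forall a, 0 <= Cc a.

Lemma Cmax_ge b : Cc b <= Cmax.
Proof. exact: le_bigmax. Qed.
Lemma Ku_ge b t : K b (noise t) <= Ku t.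
Proof. exact: le_bigmax. Qed.
Lemma Cmax_ge0 : 0 <= Cmax.
Proof. exact: le_trans (HC (ac 0)) (Cmax_ge _). Qed.
Lemma Ku_ge0 t : 0 <= Ku t.
Proof. exact: le_trans (HK (ac 0) _) (Ku_ge _ _). Qed.
Lemma Lm_ge0 m : 0 <= Lm m.
Proof.
elim: m => [|m IH] /=; first exact: Cmax_ge0.
by rewrite addr_ge0 ?Cmax_ge0 // mulr_ge0 ?Ku_ge0.
Qed.


Hypothesis HgL : forall a u s s', enorm (g s a u - g s' a u) <= K a u * enorm (s - s').
Hypothesis HRL : forall a s s', `|Rw s a - Rw s' a| <= Cc a * enorm (s - s').
Hypothesis HSd : Sd != [::].
Hypothesis HT : (2 <= T)%N.

Lemma Rw_le s sd b : Rw s b <= Rw sd b + Cmax * enorm (s - sd).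
Proof.
have h1 := HRL b s sd.
have h2 := ler_norm (Rw s b - Rw sd b).
have h3 : Cc b * enorm (s - sd) <= Cmax * enorm (s - sd).
  by apply: ler_wpM2r; [exact: sqrtr_ge0 | exact: Cmax_ge].
lra.
Qed.

Lemma Vhm_S m sd l : Vhm m.+1 sd l =
  maxA' ac k l (T.-1 - m.+1) (fun b =>
      Rw sd b + minSd Sd (fun sd' =>
        Vhm m sd' (l + (b != ac (T.-1 - m.+1)))%N
        + Lc (T.-1 - m.+1).+1 * enorm (sd' - g sd b (noise (T.-1 - m.+1))))).
Proof. by []. Qed.

Lemma main_ind m : (m <= T.-1)%N -> forall l s sd x, sd \in Sd -> (l <= k)%N ->
  (changes (T.-1 - m) x <= k - l)%N ->
  ret s (T.-1 - m) x <= Vhm m sd l + Lc (T.-1 - m) * enorm (s - sd).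
Proof.
elim: m => [|m IH] hm l s sd x hsd hl hch.
  rewrite subn0 in hch *.
  have hT : (T.-1 < T)%N by have := HT; lia.
  rewrite ret_split // /Defs.ret big_geq; last by have := HT; lia.
  rewrite addr0 /Defs.Lc subnn /=.
  apply: le_trans (Rw_le _ sd _) _; apply: lerD => //.
  apply: maxA'_ge.
  case: ltnP => //= hkl.
  have hlk : l = k by apply/eqP; rewrite eqn_leq hl hkl.
  move: hch; rewrite changes_split // hlk subnn.
  by case: eqP.
set t := (T.-1 - m.+1)%N in hch *.
have ht1 : t.+1 = (T.-1 - m)%N by rewrite /t; move: hm; lia.
have htT : (t < T)%N by rewrite /t; have := HT; lia.
set b := act x t.
set l' := (l + (b != ac t))%N.
have hch' := hch; rewrite changes_split // -/b in hch'.
have [hl' hch2] : (l' <= k)%N /\ (changes t.+1 x <= k - l')%N.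
  rewrite /l'; move: hch'; case: (b != ac t) => /= h; lia.
rewrite ret_split // -/b Vhm_S -/t.
set u := noise t; set s' := g s b u; set e := enorm (s - sd).
have e1 : Lc t.+1 = Lm m by rewrite /Defs.Lc ht1 subKn // ltnW.
have e2 : Lc t = Lm m.+1 by rewrite /Defs.Lc /t subKn.
have hLc : Lc t = Cmax + Lc t.+1 * Ku t by rewrite e1 e2.
have L0 : 0 <= Lc t.+1 by rewrite e1 Lm_ge0.
have he : 0 <= e by exact: sqrtr_ge0.
have hmin : ret s' t.+1 x - Lc t.+1 * Ku t * e <=
    minSd Sd (fun sd' => Vhm m sd' l' + Lc t.+1 * enorm (sd' - g sd b u)).
  apply: minSd_ge => // sd' hsd'.
  have := IH (ltnW hm) l' s' sd' x hsd' hl'; rewrite -ht1 => /(_ hch2) hI.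
  have tri : enorm (s' - sd') <= enorm (s' - g sd b u) + enorm (g sd b u - sd').
    have -> : s' - sd' = (s' - g sd b u) + (g sd b u - sd') by rewrite addrA subrK.
    exact: enorm_tri.
  have hg := HgL b u s sd; rewrite -/e -/s' in hg.
  have hk : K b u * e <= Ku t * e by apply: ler_wpM2r => //; exact: Ku_ge.
  have : Lc t.+1 * enorm (s' - sd') <= Lc t.+1 * (Ku t * e + enorm (sd' - g sd b u)).
    apply: ler_wpM2l => //; rewrite [enorm (sd' - _)]enormB; lra.
  rewrite mulrDr mulrA; lra.
have hcond : (l < k)%N || (b == ac t).
  case: ltnP => //= hkl.
  have hlk : l = k by apply/eqP; rewrite eqn_leq hl hkl.
  by move: hch'; rewrite hlk subnn; case: eqP.
apply: (@le_trans _ _ (Rw sd b + minSd Sd (fun sd' => Vhm m sd' l' + Lc t.+1 * enorm (sd' - g sd b u)) + Lc t * e)).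
  have := Rw_le s sd b; rewrite -/e hLc mulrDl; lra.
apply: lerD => //.
exact: (maxA'_ge l t (fun b0 => Rw sd b0 + minSd Sd (fun sd' => Vhm m sd' (l + (b0 != ac t))%N
        + Lc t.+1 * enorm (sd' - g sd b0 u)))).
Qed.

Lemma act_obs i : (i < T)%N -> act (obs_actions T ac) i = ac i.
Proof. by move=> hi; rewrite /Defs.act /obs_actions -[i]/(nat_of_ord (Ordinal hi)) nth_mktuple. Qed.

Lemma changes_obs t : changes t (obs_actions T ac) = 0%N.
Proof.
rewrite /Defs.changes big_nat big1 // => i /andP[_ hi].
by rewrite act_obs // eqxx.
Qed.

Lemma final s l t : s \in Sd -> (l <= k)%N -> (t < T)%N ->
  Vtau g ginv Rw T st ac k s l t <= Vhat g ginv Rw K Cc T st ac k Sd s l t.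
Proof.
move=> hs hl ht.
have hm : (T.-1 - t <= T.-1)%N by exact: leq_subr.
have et : (T.-1 - (T.-1 - t))%N = t by rewrite subKn //; move: ht; lia.
have key : forall x, (changes t x <= k - l)%N ->
    ret s t x <= Vhat g ginv Rw K Cc T st ac k Sd s l t.
  move=> x hx; have := main_ind _ hm l s s x hs hl; rewrite et => /(_ hx).
  by rewrite enorm_self mulr0 addr0.
apply: bigmax_le => [|x hx]; last exact: key.
by apply: key; rewrite changes_obs.
Qed.
End Main.

Theorem proposition1 (R : realType) (D : nat) (A : finType) (U : Type)
  (g : 'rV[R]_D -> A -> U -> 'rV[R]_D) (ginv : 'rV[R]_D -> A -> 'rV[R]_D -> U)
  (Rw : 'rV[R]_D -> A -> R) (K : A -> U -> R) (Cc : A -> R)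
  (T : nat) (st : nat -> 'rV[R]_D) (ac : nat -> A) (k : nat) (Sd : seq 'rV[R]_D) :
  (2 <= T)%N -> (k <= T)%N ->
  (forall s a u, ginv s a (g s a u) = u) ->
  (forall s a s', g s a (ginv s a s') = s') ->
  (forall a u, 0 <= K a u) ->
  (forall a u s s', enorm (g s a u - g s' a u) <= K a u * enorm (s - s')) ->
  (forall a, 0 <= Cc a) ->
  (forall a s s', `|Rw s a - Rw s' a| <= Cc a * enorm (s - s')) ->
  Sd != [::] ->
  forall (s : 'rV[R]_D) (l t : nat), s \in Sd -> (l <= k)%N -> (t < T)%N ->
    Vtau g ginv Rw T st ac k s l t
    <= Vhat g ginv Rw K Cc T st ac k Sd s l t.

Proof.
move=> HT _ _ _ HK HgL HC HRL HSd s l t hs hl ht.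
by eapply final; eassumption.
Qed.
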